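(* Let $\mathbf C$ and $\mathbf D$ be minimal clone $\tau$-algebras and let $\mathbf E=\mathbf C\times\mathbf D$ be their direct product as clone $\tau$-algebras. The following are equivalent: (1) $\mathbf E$ is minimal; (2) the varieties $\mathrm{Var}(\mathbf C_\tau)$ and $\mathrm{Var}(\mathbf D_\tau)$ are independent; (3) $\mathrm{Clo}\,\mathbf E_\tau=R_{\mathbf E}$. If these conditions hold, then $\mathrm{Var}(\mathbf E_\tau)=\mathrm{Var}(\mathbf C_\tau)\times\mathrm{Var}(\mathbf D_\tau)=\mathrm{Var}(\mathbf C_\tau)\vee\mathrm{Var}(\mathbf D_\tau)$, where the join is taken in the lattice of subvarieties of $\mathrm{Var}(\mathbf E_\tau)$.
   Context: A clone $\tau$-algebra is an algebra $\mathbf C=(C,\sigma^{\mathbf C}\ (\sigma\in\tau),q_n^{\mathbf C}\ (n\ge0),\mathsf e_i^{\mathbf C}\ (i\ge1))$ with $\mathsf e_i$ nullary, $q_n$ of arity $n+1$, satisfying: (C1) $q_n(\mathsf e_i,x_1,\dots,x_n)=x_i$ ($1\le i\le n$); (C2) $q_n(\mathsf e_j,x_1,\dots,x_n)=\mathsf e_j$ ($j>n$); (C3) $q_n(x,\mathsf e_1,\dots,\mathsf e_n)=x$; (C4) $q_k(x,y_1,\dots,y_k)=q_n(x,y_1,\dots,y_k,\mathsf e_{k+1},\dots,\mathsf e_n)$ ($n>k$); (C5) $q_n(q_n(x,\mathbf y),\mathbf z)=q_n(x,q_n(y_1,\mathbf z),\dots,q_n(y_n,\mathbf z))$; (C6)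 $q_n(\sigma(x_1,\dots,x_k),\mathbf y)=\sigma(q_n(x_1,\mathbf y),\dots,q_n(x_k,\mathbf y))$ for $\sigma\in\tau$ of arity $k$. $\mathbf C_\tau=(C,\sigma^{\mathbf C})_{\sigma\in\tau}$ is its $\tau$-reduct. $\mathbf C$ is minimal if $C$ is the smallest subset containing all $\mathsf e_i^{\mathbf C}$ and closed under all $\sigma^{\mathbf C}$. An element $a$ is independent of $\mathsf e_n$ if $q_n(a,\mathsf e_1,\dots,\mathsf e_{n-1},\mathsf e_{n+1})=a$; its dimension is the largest $n$ it depends on ($0$ if none). A function $f:E^k\to E$ is $\mathbf E$-representable if $f(\mathsf e_1,\dots,\mathsf e_k)$ has dimension $\le k$ and $f(a_1,\dots,a_k)=q_k(f(\mathsf e_1,\dots,\mathsf e_k),a_1,\dots,a_k)$ for all $a_i$; $R_{\mathbf E}$ is the set of these. $\mathrm{Clo}\,\mathbf E_\tau$ is the clone of term operations of $\mathbf E_\tau$ (smallest set of finitary operations, nullary included, containing projections and the basic operations, closed under composition and under restriction, i.e. dropping a last argument on which the operation does not depend). Subvarieties $\mathcal V_1,\mathcal V_2$ of type $\tau$ are independent if there is a $\tau$-term $t(v_1,v_2)$ with $\mathcal V_1\models t(v_1,v_2)=v_1$ and $\mathcal V_2\models t(v_1,v_2)=v_2$. The product of varieties is $\mathcal V_1\times\mathcal V_2=\{\mathbf A: \mathbf A\cong\mathbf A_1\times\mathbf A_2,\ \mathbf A_i\in\mathcal V_i\}$. *)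

(* Defs.v *)
From mathcomp Require Import all_boot.
Set Implicit Arguments.
Unset Strict Implicit.
Unset Printing Implicit Defensive.

Record sig := Sig { sym : Type; ar : sym -> nat }.

Inductive term (tau : sig) (X : Type) : Type :=
  | TVar : X -> term tau X
  | TApp : forall f : sym tau, ('I_(ar f) -> term tau X) -> term tau X.
Arguments TVar {tau X}.
Arguments TApp {tau X}.

Record algebra (tau : sig) := Alg {
  carrier :> Type;
  op : forall f : sym tau, ('I_(ar f) -> carrier) -> carrier }.
Arguments op {tau}.

Fixpoint eval (tau : sig) (A : algebra tau) (X : Type) (v : X -> A)
  (t : term tau X) : A :=
  match t with
  | TVar x => v x
  | TApp f args => op A f (fun i => eval v (args i))
  end.

Definition sat (tau : sig) (A : algebra tau) (X : Type) (s t : term tau X) : Prop :=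
  forall v : X -> A, eval v s = eval v t.

Definition aclass (tau : sig) := algebra tau -> Prop.

Definition csat (tau : sig) (K : aclass tau) (X : Type) (s t : term tau X) : Prop :=
  forall B, K B -> sat B s t.

Definition ident (tau : sig) := (term tau nat * term tau nat)%type.

Definition Mod (tau : sig) (Sig : ident tau -> Prop) : aclass tau :=
  fun B => forall st, Sig st -> sat B st.1 st.2.

(* The variety generated by a class K (= Mod Id K, Birkhoff). *)
Definition VarK (tau : sig) (K : aclass tau) : aclass tau :=
  Mod (fun st : ident tau => csat K st.1 st.2).

Definition Var (tau : sig) (A : algebra tau) : aclass tau :=
  Mod (fun st : ident tau => sat A st.1 st.2).

Definition independent (tau : sig) (V1 V2 : aclass tau) : Prop :=
  exists t : term tau bool,
    csat V1 t (TVar false) /\ csat V2 t (TVar true).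
(* variable v1 is [false], variable v2 is [true] *)

Definition prod_alg (tau : sig) (A1 A2 : algebra tau) : algebra tau :=
  @Alg tau (A1 * A2)%type
    (fun f args => (op A1 f (fun i => (args i).1), op A2 f (fun i => (args i).2))).

Definition iso (tau : sig) (A B : algebra tau) : Prop :=
  exists (h : A -> B) (g : B -> A),
    cancel h g /\ cancel g h /\
    forall f (args : 'I_(ar f) -> A), h (op A f args) = op B f (fun i => h (args i)).

Definition prodV (tau : sig) (V1 V2 : aclass tau) : aclass tau :=
  fun A => exists A1 A2, V1 A1 /\ V2 A2 /\ iso A (prod_alg A1 A2).

Definition joinV (tau : sig) (V1 V2 : aclass tau) : aclass tau :=
  VarK (fun B => V1 B \/ V2 B).

Definition same_class (tau : sig) (V W : aclass tau) : Prop :=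
  forall B, V B <-> W B.

Definition snoc (T : Type) (k : nat) (a : 'I_k -> T) (b : T) : 'I_k.+1 -> T :=
  fun i => match unlift ord_max i with Some j => a j | None => b end.

(* Clo A: smallest set of finitary operations (nullary included) containing
   the projections and basic operations, closed under composition and
   restriction (dropping a last argument the operation does not depend on). *)
Inductive Clo (tau : sig) (A : algebra tau) : forall k : nat, (('I_k -> A) -> A) -> Prop :=
  | Clo_proj : forall k (i : 'I_k), @Clo tau A k (fun a => a i)
  | Clo_basic : forall f : sym tau, @Clo tau A (ar f) (op A f)
  | Clo_comp : forall n k (g : ('I_n -> A) -> A) (h : 'I_n -> ('I_k -> A) -> A),
      @Clo tau A n g -> (forall i, @Clo tau A k (h i)) -> @Clo tau A k (fun a => g (fun i => h i a))
  | Clo_restr : forall k (g : ('I_k.+1 -> A) -> A) (f : ('I_k -> A) -> A),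
      @Clo tau A k.+1 g -> (forall a b, f a = g (snoc a b)) -> @Clo tau A k f.
Arguments Clo {tau} A {k} f.

(* Index convention: [ce i] stands for e_(i+1) (so e_1 = ce 0). *)
Record cloneAlg (tau : sig) := CloneAlg {
  cc : Type;
  cop : forall f : sym tau, ('I_(ar f) -> cc) -> cc;
  cq : forall n : nat, cc -> ('I_n -> cc) -> cc;
  ce : nat -> cc }.
Arguments cop {tau}.
Arguments cq {tau}.
Arguments ce {tau}.

Definition pad (tau : sig) (C : cloneAlg tau) (k n : nat) (y : 'I_k -> cc C) : 'I_n -> cc C :=
  fun i => match (insub (val i) : option 'I_k) with Some j => y j | None => ce C i end.
Arguments pad {tau} C {k} n y.

Definition is_clone (tau : sig) (C : cloneAlg tau) : Prop :=
  (forall n (x : 'I_n -> cc C) (i : 'I_n), cq C n (ce C i) x = x i) /\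
  (forall n (x : 'I_n -> cc C) (j : nat), n <= j -> cq C n (ce C j) x = ce C j) /\
  (forall n (x : cc C), cq C n x (fun i => ce C i) = x) /\
  (forall k n (x : cc C) (y : 'I_k -> cc C), k < n ->
                 cq C k x y = cq C n x (pad C n y)) /\
  (forall n x (y z : 'I_n -> cc C),
                 cq C n (cq C n x y) z = cq C n x (fun i => cq C n (y i) z)) /\
  (forall n (f : sym tau) (x : 'I_(ar f) -> cc C) (y : 'I_n -> cc C),
                 cq C n (cop C f x) y = cop C f (fun j => cq C n (x j) y)).

Definition reduct (tau : sig) (C : cloneAlg tau) : algebra tau := @Alg tau (cc C) (cop C).

Definition prodC (tau : sig) (C D : cloneAlg tau) : cloneAlg tau :=
  @CloneAlg tau (cc C * cc D)%type
    (fun f x => (cop C f (fun i => (x i).1), cop D f (fun i => (x i).2)))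
    (fun n a y => (cq C n a.1 (fun i => (y i).1), cq D n a.2 (fun i => (y i).2)))
    (fun i => (ce C i, ce D i)).

Definition minimal (tau : sig) (C : cloneAlg tau) : Prop :=
  forall P : cc C -> Prop,
    (forall i, P (ce C i)) ->
    (forall f (x : 'I_(ar f) -> cc C), (forall j, P (x j)) -> P (cop C f x)) ->
    forall a, P a.

(* a is independent of e_n (n >= 1, 1-indexed):
   q_n(a, e_1, ..., e_(n-1), e_(n+1)) = a. *)
Definition indep_of (tau : sig) (C : cloneAlg tau) (a : cc C) (n : nat) : Prop :=
  cq C n a (fun i : 'I_n => ce C (if val i == n.-1 then n else val i)) = a.
Arguments indep_of {tau} C a n.

Definition dim_le (tau : sig) (C : cloneAlg tau) (a : cc C) (k : nat) : Prop :=
  forall n, k < n -> indep_of C a n.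
Arguments dim_le {tau} C a k.

Definition representable (tau : sig) (C : cloneAlg tau) (k : nat)
  (f : ('I_k -> cc C) -> cc C) : Prop :=
  dim_le C (f (fun i => ce C i)) k /\
  forall a : 'I_k -> cc C, f a = cq C k (f (fun i => ce C i)) a.
Arguments representable {tau} C {k} f.

(* Main.v *)
Require Import Defs.
From mathcomp Require Import all_boot.
From Stdlib Require Import FunctionalExtensionality ProofIrrelevance ClassicalEpsilon Classical.

Set Implicit Arguments.
Unset Strict Implicit.
Unset Printing Implicit Defensive.

Fixpoint subst (tau : sig) (X Y : Type) (s : X -> term tau Y) (t : term tau X) : term tau Y :=
  match t with
  | TVar x => s x
  | TApp f args => TApp f (fun i => subst s (args i))
  end.

Lemma eval_subst (tau : sig) (A : algebra tau) X Y (v : Y -> A) (s : X -> term tau Y) t :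
  eval v (subst s t) = eval (fun x => eval v (s x)) t.
Proof.
elim: t => [x|f args IH] //=.
congr (op A f); apply: functional_extensionality => i; exact: IH.
Qed.

Fixpoint bnd (tau : sig) (t : term tau nat) : nat :=
  match t with
  | TVar x => x.+1
  | TApp f args => \max_(i < ar f) bnd (args i)
  end.

Lemma eval_bnd (tau : sig) (A : algebra tau) (v w : nat -> A) t :
  (forall j, j < bnd t -> v j = w j) -> eval v t = eval w t.
Proof.
elim: t => [x|f args IH] /= H; first exact: H.
congr (op A f); apply: functional_extensionality => i; apply: IH => j hj.
apply: H; apply: leq_trans hj _; exact: (leq_bigmax (F := fun i => bnd (args i)) i).
Qed.

Lemma fin_choice (I T : Type) (P : I -> T -> Prop) :
  (forall i, exists x, P i x) -> exists f : I -> T, forall i, P i (f i).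
Proof.
move=> H; exists (fun i => proj1_sig (constructive_indefinite_description _ (H i))).
move=> i; exact: proj2_sig (constructive_indefinite_description _ (H i)).
Qed.

Lemma eval_prod (tau : sig) (A1 A2 : algebra tau) X (v : X -> prod_alg A1 A2) t :
  eval v t = (eval (fun x => (v x).1) t, eval (fun x => (v x).2) t).
Proof.
elim: t => [x|f args IH] /=; first by case: (v x).
congr pair; congr (op _ f); apply: functional_extensionality => i; by rewrite IH.
Qed.

Notation evr X v t := (@eval _ (reduct X) _ v t).

Lemma snoc_lt (T : Type) k (a : 'I_k -> T) b (i : 'I_k.+1) (h : val i < k) :
  snoc a b i = a (Ordinal h).
Proof.
rewrite /snoc; move: h; case: unliftP => [j ->|->] h.
  by congr a; apply: val_inj; rewrite /= /bump leqNgt ltn_ord.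
by exfalso; move: h; rewrite /= ltnn.
Qed.

Lemma snoc_max (T : Type) k (a : 'I_k -> T) b : snoc a b ord_max = b.
Proof. by rewrite /snoc unlift_none. Qed.

Lemma snoc_restr (T : Type) k (v : nat -> T) :
  snoc (fun i : 'I_k => v i) (v k) = (fun i : 'I_k.+1 => v i).
Proof.
apply: functional_extensionality => i.
case: (ltnP (val i) k) => h; first by rewrite (snoc_lt _ _ h).
have -> : i = ord_max by apply: val_inj; apply/eqP; rewrite eqn_leq h -ltnS ltn_ord.
by rewrite snoc_max.
Qed.

Lemma Clo_term (tau : sig) (A : algebra tau) k (f : ('I_k -> A) -> A) :
  Clo A f -> exists s : term tau nat, forall v : nat -> A, f (fun i : 'I_k => v i) = eval v s.
Proof.
elim=> {k f}.
- move=> k i; by exists (TVar (val i)).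
- move=> f; by exists (TApp f (fun i => TVar (val i))).
- move=> n k g h _ [sg Hg] _ Hh.
  have [sh Hsh] := fin_choice Hh.
  exists (subst (fun j => match (insub j : option 'I_n) with Some i => sh i | None => TVar j end) sg).
  move=> v; rewrite eval_subst -Hg; congr g; apply: functional_extensionality => i.
  by rewrite valK Hsh.
- move=> k g f _ [sg Hg] Hf; exists sg => v.
  by rewrite (Hf _ (v k)) snoc_restr Hg.
Qed.

Lemma term_Clo (tau : sig) (A : algebra tau) m (t : term tau 'I_m) :
  Clo A (fun a => eval a t).
Proof.
elim: t => [i|f args IH]; first exact: Clo_proj.
exact: (Clo_comp (Clo_basic A f) IH).
Qed.


Lemma q_ce_lt (tau : sig) (X : cloneAlg tau) N j (y : 'I_N -> cc X) (h : j < N) :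
  is_clone X -> cq X N (ce X j) y = y (Ordinal h).
Proof. case=> C1 _; exact: (C1 N y (Ordinal h)). Qed.

Lemma q_ce_ge (tau : sig) (X : cloneAlg tau) N j (y : 'I_N -> cc X) :
  is_clone X -> N <= j -> cq X N (ce X j) y = ce X j.
Proof. case=> _ [C2 _] h; exact: C2. Qed.

Lemma eval_q (tau : sig) (X : cloneAlg tau) N (v : nat -> cc X) y t :
  is_clone X -> cq X N (evr X v t) y = evr X (fun j => cq X N (v j) y) t.
Proof.
case=> _ [_ [_ [_ [_ C6]]]].
elim: t => [x|f args IH] //=.
rewrite C6; congr (cop X f); apply: functional_extensionality => i; exact: IH.
Qed.

Lemma evr_q (tau : sig) (X : cloneAlg tau) N (v : nat -> cc X) t :
  is_clone X -> bnd t <= N -> evr X v t = cq X N (evr X (ce X) t) (fun i : 'I_N => v i).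
Proof.
move=> HX hN; rewrite eval_q //; apply: eval_bnd => j hj.
by rewrite (q_ce_lt _ (leq_trans hj hN)).
Qed.

Lemma free_lemma (tau : sig) (X : cloneAlg tau) (s s' : term tau nat) :
  is_clone X -> evr X (ce X) s = evr X (ce X) s' -> forall v, evr X v s = evr X v s'.
Proof.
move=> HX e v.
rewrite (@evr_q _ _ (maxn (bnd s) (bnd s')) v s HX (leq_maxl _ _)).
by rewrite (@evr_q _ _ (maxn (bnd s) (bnd s')) v s' HX (leq_maxr _ _)) e.
Qed.

Lemma min_term (tau : sig) (X : cloneAlg tau) :
  minimal X -> forall a, exists s, a = evr X (ce X) s.
Proof.
move=> HM; apply: HM => [i|f x Hx]; first by exists (TVar i).
have [sf Hsf] := fin_choice Hx.
exists (TApp f sf) => /=; congr (cop X f); apply: functional_extensionality => i; exact: Hsf.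
Qed.

Lemma L1 (tau : sig) (X : cloneAlg tau) (x : cc X) n N (y y' : 'I_N -> cc X) :
  is_clone X -> 0 < n -> n <= N -> indep_of X x n ->
  (forall i : 'I_N, val i != n.-1 -> y i = y' i) -> cq X N x y = cq X N x y'.
Proof.
move=> HX hn hnN hind H.
have HX' := HX; case: HX' => C1 [C2 [C3 [C4 [C5 C6]]]].
pose u : 'I_N -> cc X := fun i => ce X (if val i == n.-1 then n else val i).
have hx : cq X N x u = x.
  move: hnN; rewrite leq_eqVlt => /orP [/eqP eN | ltnN].
    by subst N; exact: hind.
  rewrite -{2}hind (C4 _ _ _ _ ltnN); congr (cq X N x).
  apply: functional_extensionality => i; rewrite /pad /u.
  case: insubP => [j hj vj|hi]; first by rewrite vj.
  have -> : (val i == n.-1) = false.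
    apply/negbTE; move: hi; rewrite -leqNgt => hi; apply/eqP => e.
    by move: hi hn; rewrite e; case: (n) => //= m; rewrite ltnn.
  by [].
have E1 : forall w, cq X N x w = cq X N x (fun i => cq X N (u i) w).
  by move=> w; rewrite -{1}hx C5.
rewrite E1 (E1 y'); congr (cq X N x); apply: functional_extensionality => i.
rewrite /u; case: eqP => [hi|hi].
  case: (ltnP n N) => h.
    rewrite !(q_ce_lt _ h HX); apply: H => /=.
    by case: (n) hn => // m _; rewrite /= eqn_leq ltnn.
  by rewrite !(q_ce_ge _ HX h).
rewrite (C1 N y i) (C1 N y' i); apply: H; exact/eqP.
Qed.

Lemma L2 (tau : sig) (X : cloneAlg tau) (x : cc X) k N (y y' : 'I_N -> cc X) :
  is_clone X -> dim_le X x k ->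
  (forall i : 'I_N, val i < k -> y i = y' i) -> cq X N x y = cq X N x y'.
Proof.
move=> HX hd H.
case: (leqP N k) => hNk.
  congr (cq X N x); apply: functional_extensionality => i; apply: H.
  exact: leq_trans (ltn_ord i) hNk.
pose z m := fun i : 'I_N => if val i < m then y' i else y i.
have Hz : forall d, cq X N x (z (k + d)) = cq X N x y.
  elim=> [|d IH].
    rewrite addn0; congr (cq X N x); apply: functional_extensionality => i.
    rewrite /z; case: ifP => h; last by []. by rewrite H.
  case: (ltnP (k + d) N) => h.
    rewrite -IH.
    apply: (@L1 _ _ _ (k + d).+1 N _ _ HX (ltn0Sn _) h).
      by apply: hd; rewrite ltnS leq_addr.
    move=> i hi; rewrite /z /= addnS ltnS leq_eqVlt.
    by rewrite (negbTE hi).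
  rewrite -IH; congr (cq X N x); apply: functional_extensionality => i.
  rewrite /z; have h1 : val i < k + d by exact: leq_trans (ltn_ord i) h.
  by rewrite h1 addnS ltnS ltnW.
rewrite -(Hz (N - k)) subnKC; last exact: ltnW.
congr (cq X N x).
by apply: functional_extensionality => i; rewrite /z ltn_ord.
Qed.

Lemma Clo_rep (tau : sig) (X : cloneAlg tau) k (f : ('I_k -> cc X) -> cc X) :
  is_clone X -> Clo (reduct X) f -> representable X f.
Proof.
move=> HX /Clo_term [s Hs].
have HX' := HX; case: HX' => C1 [C2 [C3 [C4 [C5 C6]]]].
have Hfe : f (fun i => ce X i) = evr X (ce X) s by exact: (Hs (ce X)).
split.
  move=> n hkn; rewrite /indep_of Hfe eval_q // -Hs -(Hs (ce X)).
  congr f; apply: functional_extensionality => i.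
  have hi : val i < n by exact: ltn_trans (ltn_ord i) hkn.
  rewrite (q_ce_lt _ hi HX) /=.
  have -> : (val i == n.-1) = false.
    apply/negbTE; apply/eqP => e; move: (ltn_ord i) hkn; rewrite e.
    by case: (n) => //= m h1 h2; move: (leq_trans h2 h1); rewrite ltnn.
  by [].
move=> a; rewrite Hfe eval_q // -Hs; congr f; apply: functional_extensionality => i.
by rewrite C1.
Qed.

Lemma rep_Clo (tau : sig) (X : cloneAlg tau) k (f : ('I_k -> cc X) -> cc X) :
  is_clone X -> minimal X -> representable X f -> Clo (reduct X) f.
Proof.
move=> HX HM [hd hf].
have HX' := HX; case: HX' => C1 [C2 [C3 [C4 [C5 C6]]]].
have [s Hs] := min_term HM (f (fun i => ce X i)).
pose r j : 'I_k.+1 := inord (minn j k).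
pose t' := subst (fun j => TVar (r j)) s.
apply: (Clo_restr (term_Clo (reduct X) t')) => a b.
rewrite eval_subst /= hf Hs eval_q //.
pose N := bnd s.
rewrite (@evr_q _ _ N _ s HX (leqnn _)) (@evr_q _ _ N (fun x => snoc a b (r x)) s HX (leqnn _)).
rewrite -Hs; apply: (L2 HX hd) => i hi.
rewrite (q_ce_lt _ hi HX) /r.
have hm : minn i k = i by apply/minn_idPl; exact: (ltnW hi).
have hv : nat_of_ord (inord (minn i k) : 'I_k.+1) < k by rewrite inordK hm // ltnS (ltnW hi).
rewrite (snoc_lt _ _ hv); congr a; apply: val_inj.
by rewrite /= inordK hm // ltnS (ltnW hi).
Qed.

Lemma prodC_clone (tau : sig) (C D : cloneAlg tau) :
  is_clone C -> is_clone D -> is_clone (prodC C D).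
Proof.
case=> C1 [C2 [C3 [C4 [C5 C6]]]] [D1 [D2 [D3 [D4 [D5 D6]]]]].
split; [|split; [|split; [|split; [|split]]]] => /=.
- by move=> n x i; rewrite C1 D1; case: (x i).
- by move=> n x j h; rewrite C2 ?D2.
- by move=> n [a b]; rewrite /= C3 D3.
- move=> k n x y h; rewrite (C4 _ _ _ _ h) (D4 _ _ _ _ h).
  congr pair; congr cq; apply: functional_extensionality => i; rewrite /pad; by case: insub.
- by move=> n x y z; rewrite /= C5 D5.
- by move=> n f x y; rewrite /= C6 D6.
Qed.

Lemma ev_pair (tau : sig) (C D : cloneAlg tau) (v : nat -> cc (prodC C D)) t :
  evr (prodC C D) v t = (evr C (fun j => (v j).1) t, evr D (fun j => (v j).2) t).
Proof. exact: (@eval_prod tau (reduct C) (reduct D) nat v t). Qed.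

Lemma Var_self (tau : sig) (A : algebra tau) : Var A A.
Proof. by move=> st. Qed.

Lemma rep_indep (tau : sig) (C D : cloneAlg tau) :
  is_clone C -> is_clone D ->
  (exists s, evr (prodC C D) (ce (prodC C D)) s = (ce C 0, ce D 1)) ->
  independent (Var (reduct C)) (Var (reduct D)).
Proof.
move=> HC HD [s]; rewrite ev_pair /= => [[eC eD]].
have sC : sat (reduct C) s (TVar 0) by apply: (free_lemma HC).
have sD : sat (reduct D) s (TVar 1) by apply: (free_lemma HD).
exists (subst (fun j => TVar (j != 0)) s); split=> B HB w.
  by rewrite eval_subst (HB (s, TVar 0) sC).
by rewrite eval_subst (HB (s, TVar 1) sD).
Qed.

Lemma indep_sat (tau : sig) (C D : cloneAlg tau) :
  independent (Var (reduct C)) (Var (reduct D)) ->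
  exists tb : term tau bool, (forall w : bool -> cc C, evr C w tb = w false) /\
                              (forall w : bool -> cc D, evr D w tb = w true).
Proof.
case=> tb [h1 h2]; exists tb; split.
  move=> w; exact: (h1 _ (@Var_self _ (reduct C)) w).
move=> w; exact: (h2 _ (@Var_self _ (reduct D)) w).
Qed.

Lemma min_terms (tau : sig) (X : cloneAlg tau) (P : cc X -> Prop) :
  (forall i, P (ce X i)) ->
  (forall f (x : 'I_(ar f) -> cc X), (forall j, P (x j)) -> P (cop X f x)) ->
  forall t, P (evr X (ce X) t).
Proof.
move=> H1 H2; elim=> [x|f args IH] /=; [exact: H1 | exact: H2].
Qed.

Lemma indep_min (tau : sig) (C D : cloneAlg tau) :
  minimal C -> minimal D ->
  independent (Var (reduct C)) (Var (reduct D)) -> minimal (prodC C D).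
Proof.
move=> MC MD /indep_sat [tb [tC tD]] P H1 H2 [a b].
have [sa ->] := min_term MC a.
have [sb ->] := min_term MD b.
have := min_terms H1 H2 (subst (fun x : bool => if x then sb else sa) tb).
by rewrite ev_pair /= !eval_subst tC tD.
Qed.

Lemma min_indep (tau : sig) (C D : cloneAlg tau) :
  is_clone C -> is_clone D -> minimal (prodC C D) ->
  independent (Var (reduct C)) (Var (reduct D)).
Proof.
move=> HC HD ME; apply: rep_indep => //.
have [s Hs] := min_term ME (ce C 0, ce D 1); by exists s.
Qed.

Lemma CloR_indep (tau : sig) (C D : cloneAlg tau) :
  is_clone C -> is_clone D ->
  (forall k (f : ('I_k -> cc (prodC C D)) -> cc (prodC C D)),
          Clo (reduct (prodC C D)) f <-> representable (prodC C D) f) ->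
  independent (Var (reduct C)) (Var (reduct D)).
Proof.
move=> HC HD H.
have HE := prodC_clone HC HD.
have HE' := HE; case: HE' => E1 [E2 [E3 [E4 [E5 E6]]]].
pose x : cc (prodC C D) := (ce C 0, ce D 1).
pose f := fun a : 'I_2 -> cc (prodC C D) => cq (prodC C D) 2 x a.
have fe : f (fun i => ce (prodC C D) i) = x by rewrite /f E3.
have rf : representable (prodC C D) f.
  split; last by move=> a; rewrite fe.
  move=> n hn; rewrite fe /indep_of /x /=.
  have h0 : 0 < n by exact: ltn_trans hn.
  have h1 : 1 < n by exact: ltn_trans hn.
  rewrite (q_ce_lt _ h0 HC) (q_ce_lt _ h1 HD) /=.
  have -> : (0 == n.-1) = false by case: n hn h0 h1 => // [[|[|m]]].
  have -> : (1 == n.-1) = false by case: n hn h0 h1 => // [[|[|m]]].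
  by [].
have [s Hs] := Clo_term ((H 2 f).2 rf).
apply: rep_indep => //; exists s; rewrite -Hs; exact: fe.
Qed.

Lemma sig_eq (T : Type) (P : T -> Prop) (x y : {a | P a}) : sval x = sval y -> x = y.
Proof. case: x y => [a pa] [b pb] /= e; subst b; congr exist; apply: proof_irrelevance. Qed.

Definition subA (tau : sig) (B : algebra tau) (m : B -> B) (hm : forall b, m (m b) = m b) :
  algebra tau :=
  @Alg tau {a : B | m a = a} (fun f x => exist _ (m (op B f (fun i => sval (x i)))) (hm _)).

Lemma subA_eval (tau : sig) (B : algebra tau) (m : B -> B) (hm : forall b, m (m b) = m b) :
  (forall f (a : 'I_(ar f) -> B), m (op B f (fun i => m (a i))) = m (op B f a)) ->
  forall (v : nat -> subA hm) t, sval (eval v t) = m (eval (fun x => sval (v x)) t).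
Proof.
move=> Hop v; elim=> [x|f args IH] /=; first by rewrite (svalP (v x)).
rewrite -[in RHS]Hop; congr (m (op B f _)); apply: functional_extensionality => i; exact: IH.
Qed.

Lemma subA_sat (tau : sig) (B : algebra tau) (m : B -> B) (hm : forall b, m (m b) = m b) :
  (forall f (a : 'I_(ar f) -> B), m (op B f (fun i => m (a i))) = m (op B f a)) ->
  forall s s', (forall w : nat -> B, m (eval w s) = m (eval w s')) -> sat (subA hm) s s'.
Proof.
move=> Hop s s' H v; apply: sig_eq; rewrite !subA_eval //; exact: H.
Qed.

Lemma hom_eval (tau : sig) (B P : algebra tau) (h : B -> P) :
  (forall f (args : 'I_(ar f) -> B), h (op B f args) = op P f (fun i => h (args i))) ->
  forall (w : nat -> B) t, h (eval w t) = eval (fun x => h (w x)) t.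
Proof.
move=> hh w; elim=> [x|f args IH] //=.
rewrite hh; congr (op P f); apply: functional_extensionality => i; exact: IH.
Qed.

Lemma iso_sat (tau : sig) (B P : algebra tau) (s s' : term tau nat) : iso B P -> sat P s s' -> sat B s s'.
Proof.
case=> h [g [hg [gh hh]]] H w.
by rewrite -(hg (eval w s)) -(hg (eval w s')) !(hom_eval hh) H.
Qed.

Lemma prod_sat (tau : sig) (A1 A2 : algebra tau) (s s' : term tau nat) :
  sat A1 s s' -> sat A2 s s' -> sat (prod_alg A1 A2) s s'.
Proof. by move=> H1 H2 w; rewrite !eval_prod H1 H2. Qed.

Lemma satE_C (tau : sig) (C D : cloneAlg tau) (s s' : term tau nat) :
  sat (reduct (prodC C D)) s s' -> sat (reduct C) s s' /\ sat (reduct D) s s'.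
Proof.
move=> H; split=> v.
  by have := H (fun j => (v j, ce D j)); rewrite !ev_pair; case.
by have := H (fun j => (ce C j, v j)); rewrite !ev_pair; case.
Qed.

Lemma prodV_VarE (tau : sig) (C D : cloneAlg tau) B :
  prodV (Var (reduct C)) (Var (reduct D)) B -> Var (reduct (prodC C D)) B.
Proof.
case=> A1 [A2 [H1 [H2 Hi]]] st /satE_C [sC sD].
apply: (iso_sat Hi); apply: prod_sat; [exact: H1 | exact: H2].
Qed.

Lemma prodV_joinV (tau : sig) (V1 V2 : aclass tau) B :
  prodV V1 V2 B -> joinV V1 V2 B.
Proof.
case=> A1 [A2 [H1 [H2 Hi]]] st Hst.
apply: (iso_sat Hi); apply: prod_sat; apply: Hst; by [left | right].
Qed.

Lemma joinV_VarE (tau : sig) (C D : cloneAlg tau) B :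
  joinV (Var (reduct C)) (Var (reduct D)) B -> Var (reduct (prodC C D)) B.
Proof.
move=> HB st /satE_C [sC sD]; apply: HB => B' [H|H]; exact: H.
Qed.

Definition wa0 (B : Type) (c : B) (n : nat) (a : 'I_n -> B) : nat -> B := fun j => match j with
   0 => c | j'.+1 => match (insub j' : option 'I_n) with Some i => a i | None => c end end.
Arguments wa0 : simpl never.

Lemma VarE_prodV (tau : sig) (C D : cloneAlg tau) :
  independent (Var (reduct C)) (Var (reduct D)) ->
  forall B, Var (reduct (prodC C D)) B -> prodV (Var (reduct C)) (Var (reduct D)) B.
Proof.
move=> /indep_sat [tb [tC tD]] B HB.
have SB : forall s s', (forall v, evr C v s = evr C v s') -> (forall v, evr D v s = evr D v s') ->
    forall w : nat -> B, eval w s = eval w s'.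
  move=> s s' h1 h2; apply: (HB (s, s')) => v /=; rewrite !ev_pair; by rewrite h1 h2.
case: (classic (inhabited B)) => [[c]|nB]; last first.
  have VB : forall V : aclass tau, (V = Var (reduct C) \/ V = Var (reduct D)) -> V B.
    move=> V [->|->] st _ v; exfalso; apply: nB; exact: (inhabits (v 0)).
  exists B, B; split; first by apply: VB; left.
  split; first by apply: VB; right.
  exists (fun b => (b, b)), (fun p => p.1); split; first by [].
  split; first by move=> p; exfalso; apply: nB; exact: (inhabits p.1).
  move=> f args; exfalso; apply: nB; exact: (inhabits (op B f args)).
pose T (a b : term tau nat) := subst (fun x : bool => if x then b else a) tb.
have TC : forall v a b, evr C v (T a b) = evr C v a by move=> v a b; rewrite eval_subst tC.
have TD : forall v a b, evr D v (T a b) = evr D v b by move=> v a b; rewrite eval_subst tD.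
pose tt (a b : B) := eval (fun x : bool => if x then b else a) tb.
have TB : forall (w : nat -> B) a b, eval w (T a b) = tt (eval w a) (eval w b).
  move=> w a b; rewrite eval_subst; congr eval; apply: functional_extensionality; by case.
pose w3 (a b d : B) : nat -> B := fun j => match j with 0 => a | 1 => b | _ => d end.
have I1 : forall a b d, tt (tt a b) d = tt a d.
  move=> a b d.
  have := SB (T (T (TVar 0) (TVar 1)) (TVar 2)) (T (TVar 0) (TVar 2)).
  move=> /(_ _ _ (w3 a b d)); rewrite !TB; apply.
    by move=> v; rewrite !TC.
  by move=> v; rewrite !TD.
have I2 : forall a b d, tt d (tt a b) = tt d b.
  move=> a b d.
  have := SB (T (TVar 2) (T (TVar 0) (TVar 1))) (T (TVar 2) (TVar 1)).
  move=> /(_ _ _ (w3 a b d)); rewrite !TB; apply.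
    by move=> v; rewrite !TC.
  by move=> v; rewrite !TD.
have I3 : forall a, tt (tt a c) (tt c a) = a.
  move=> a.
  have := SB (T (T (TVar 0) (TVar 1)) (T (TVar 1) (TVar 0))) (TVar 0).
  move=> /(_ _ _ (w3 a c c)); rewrite !TB; apply.
    by move=> v; rewrite !TC.
  by move=> v; rewrite !TD.
pose wa := @wa0 B c.
have wav : forall n (a : 'I_n -> B) (i : 'I_n), wa n a (nat_of_ord i).+1 = a i.
  by move=> n a i; rewrite /wa /wa0 valK.
have I4 : forall f (a : 'I_(ar f) -> B), tt (op B f (fun i => tt (a i) c)) c = tt (op B f a) c.
  move=> f a.
  have := SB (T (TApp f (fun i => T (TVar (nat_of_ord i).+1) (TVar 0))) (TVar 0))
             (T (TApp f (fun i => TVar (nat_of_ord i).+1)) (TVar 0)).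
  move=> /(_ _ _ (wa _ a)); rewrite !TB /=.
  have -> : (fun i => eval (wa (ar f) a) (T (TVar (nat_of_ord i).+1) (TVar 0))) = (fun i => tt (a i) c).
    by apply: functional_extensionality => i; rewrite TB /= wav.
  have -> : (fun i => wa (ar f) a (nat_of_ord i).+1) = a.
    by apply: functional_extensionality => i; rewrite wav.
  apply.
    move=> v; rewrite !TC /=; congr (cop C f); apply: functional_extensionality => i.
    by rewrite TC.
  by move=> v; rewrite !TD.
have I5 : forall f (a : 'I_(ar f) -> B), tt c (op B f (fun i => tt c (a i))) = tt c (op B f a).
  move=> f a.
  have := SB (T (TVar 0) (TApp f (fun i => T (TVar 0) (TVar (nat_of_ord i).+1))))
             (T (TVar 0) (TApp f (fun i => TVar (nat_of_ord i).+1))).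
  move=> /(_ _ _ (wa _ a)); rewrite !TB /=.
  have -> : (fun i => eval (wa (ar f) a) (T (TVar 0) (TVar (nat_of_ord i).+1))) = (fun i => tt c (a i)).
    by apply: functional_extensionality => i; rewrite TB /= wav.
  have -> : (fun i => wa (ar f) a (nat_of_ord i).+1) = a.
    by apply: functional_extensionality => i; rewrite wav.
  apply.
    by move=> v; rewrite !TC.
  move=> v; rewrite !TD /=; congr (cop D f); apply: functional_extensionality => i.
  by rewrite TD.
pose sh (s : term tau nat) := subst (fun j => TVar j.+1) s.
pose ws (w : nat -> B) : nat -> B := fun j => if j is j'.+1 then w j' else c.
have S1 : forall s s', sat (reduct C) s s' -> forall w : nat -> B, tt (eval w s) c = tt (eval w s') c.
  move=> s s' H w.
  have := SB (T (sh s) (TVar 0)) (T (sh s') (TVar 0)).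
  move=> /(_ _ _ (ws w)); rewrite !TB /= !eval_subst /=; apply.
    by move=> v; rewrite !TC !eval_subst /=; apply: H.
  by move=> v; rewrite !TD.
have S2 : forall s s', sat (reduct D) s s' -> forall w : nat -> B, tt c (eval w s) = tt c (eval w s').
  move=> s s' H w.
  have := SB (T (TVar 0) (sh s)) (T (TVar 0) (sh s')).
  move=> /(_ _ _ (ws w)); rewrite !TB /= !eval_subst /=; apply.
    by move=> v; rewrite !TC.
  by move=> v; rewrite !TD !eval_subst /=; apply: H.
have hm1 : forall b, tt (tt b c) c = tt b c by move=> b; rewrite I1.
have hm2 : forall b, tt c (tt c b) = tt c b by move=> b; rewrite I2.
exists (subA (m := fun b => tt b c) hm1), (subA (m := fun b => tt c b) hm2).
split.
  move=> st Hst; apply: subA_sat; first exact: I4.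
  exact: S1.
split.
  move=> st Hst; apply: subA_sat; first exact: I5.
  exact: S2.
exists (fun b => (exist _ (tt b c) (hm1 b), exist _ (tt c b) (hm2 b)) : prod_alg (subA hm1) (subA hm2)).
exists (fun p => tt (sval p.1) (sval p.2)).
split; first by move=> b; rewrite /= I3.
split.
  move=> [[a1 pa1] [a2 pa2]] /=; congr pair; apply: sig_eq => /=.
    by rewrite I1 pa1.
  by rewrite I2 pa2.
move=> f args /=; congr pair; apply: sig_eq => /=.
  by rewrite I4.
by rewrite I5.
Qed.

Theorem theorem11p17 (tau : sig) (C D : cloneAlg tau) :
  is_clone C -> is_clone D -> minimal C -> minimal D ->
  ((minimal (prodC C D) <-> independent (Var (reduct C)) (Var (reduct D))) /\
   (independent (Var (reduct C)) (Var (reduct D)) <->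
      (forall k (f : ('I_k -> cc (prodC C D)) -> cc (prodC C D)),
          Clo (reduct (prodC C D)) f <-> representable (prodC C D) f))) /\
  (minimal (prodC C D) ->
     same_class (Var (reduct (prodC C D))) (prodV (Var (reduct C)) (Var (reduct D))) /\
     same_class (prodV (Var (reduct C)) (Var (reduct D)))
                (joinV (Var (reduct C)) (Var (reduct D)))).
Proof.
move=> HC HD MC MD.
have HE := prodC_clone HC HD.
split; first split.
- split; [exact: min_indep | exact: indep_min].
- split; last exact: CloR_indep.
  move=> Hi k f; have ME := indep_min MC MD Hi.
  split; [exact: Clo_rep | exact: rep_Clo].
move=> ME; have Hi := min_indep HC HD ME.
split=> B; split.
- exact: VarE_prodV.
- exact: prodV_VarE.
- exact: prodV_joinV.
- move=> HB; apply: (VarE_prodV Hi); exact: joinV_VarE.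
Qed.
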